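(* Assume the setting, hypotheses and Rothe scheme described in the context, and for every sufficiently small $\tau=T/N$ let $\{u_\tau^n\}_{n=1}^N$, $\{\xi_\tau^n\}_{n=1}^N$ be a solution of Problem $\mathcal P_\tau$. Then $u_\tau^1-u_\tau^0\to0$ strongly in $H$ as $\tau\to0$.
   Context: $V$ is a real reflexive separable Banach space with norm $\|\cdot\|$, $H$ is a real separable Hilbert space with inner product $(\cdot,\cdot)$ and norm $|\cdot|$, identified with its dual, and $V\subset H\subset V^*$ with dense continuous embeddings, the embedding $V\subset H$ being compact; $\langle\cdot,\cdot\rangle$ is the $V^*\times V$ duality pairing, with $\langle u,v\rangle=(u,v)$ for $u\in H$, $v\in V$. $U$ is a reflexive Banach space, $T>0$. For locally Lipschitz $J\colon U\to\mathbb R$, $J^0(x;v)=\limsup_{y\to x,\lambda\downarrow0}\frac{J(y+\lambda v)-J(y)}{\lambda}$ and $\partial J(x)=\{\xi\in U^*:J^0(x;v)\ge\langle\xi,v\rangle_{U^*\times U}\ \forall v\in U\}$ (Clarke subdifferential); $\iota^*$ is the adjoint of $\iota$. Hypotheses: (H(A)) $A\colon V\to V^*$ is pseudomonotone (whenever $v_n\to v$ weakly in $V$ and $\limsup_n\langle Av_n,v_n-v\rangle\le0$, then $\langle Av,v-y\rangle\le\liminf_n\langle Av_n,v_n-y\rangle$ for all $y\in V$), $\|Av\|_{V^*}\le a+b\|v\|$ ($a\ge0,b>0$), $\langle Av,v\rangle\ge\alpha\|v\|^2-\beta|v|^2$ ($\alpha>0,\beta\ge0$) for all $v\in V$. (H(J))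 $J$ is locally Lipschitz and $\|\xi\|_{U^*}\le d(1+\|u\|_U)$ for all $u\in U$, $\xi\in\partial J(u)$, $d>0$. (H($\iota$)) $\iota\colon V\to U$ is linear, continuous, compact, and $\iota=\iota_2\circ\iota_1$ where $Z$ is a Banach space with $V\subset Z\subset H$, $V\subset Z$ compact, $Z\subset H$ continuous, $\iota_1\colon V\to Z$ the identity and $\iota_2\colon Z\to U$ linear continuous. (H(f)) $f\in L^2(0,T;V^* )$. (H(0)) $u_0\in H$. Rothe scheme: for $N\in\mathbb N$, $\tau=T/N$, an element $u_\tau^0\in V$ is given for each $\tau$, such that $u_\tau^0\to u_0$ strongly in $H$ as $\tau\to0$ and $\|u_\tau^0\|\le c_0/\sqrt\tau$ with $c_0$ independent of $\tau$. Set $f_\tau^1=\frac1\tau\int_0^\tau f\,dt$ and $f_\tau^n=\frac{3}{2\tau}\int_{(n-1)\tau}^{n\tau}f\,dt-\frac1{2\tau}\int_{(n-2)\tau}^{(n-1)\tau}f\,dt$, $n=2,\dots,N$. Problem $\mathcal P_\tau$: find $\{u_\tau^n\}_{n=1}^N\subset V$ and $\{\xi_\tau^n\}_{n=1}^N\subset U^*$ with $\frac1\tau(u_\tau^1-u_\tau^0)+Au_\tau^1+\iota^*\xi_\tau^1=f_\tau^1$, $\xi_\tau^1\in\partial J(\iota u_\tau^1)$, and for $n=2,\dots,N$: $\frac1\tau(\frac32u_\tau^n-2u_\tau^{n-1}+\frac12u_\tau^{n-2})+Au_\tau^n+\iota^*\xi_\tau^n=f_\tau^n$, $\xi_\tau^n\in\partial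 J(\iota u_\tau^n)$. *)

(* Defs.v *)
From HB Require Import structures.
From mathcomp Require Import all_boot all_order all_algebra.
From mathcomp Require Import all_classical all_reals all_analysis.
Set Implicit Arguments. Unset Strict Implicit. Unset Printing Implicit Defensive.
Import Order.TTheory GRing.Theory Num.Theory.
Import numFieldNormedType.Exports.
Local Open Scope classical_set_scope.
Local Open Scope ring_scope.

Section Defs.
Variable R : realType.

Definition is_linmap (X Y : normedModType R) (L : X -> Y) :=
  forall (a : R) (x y : X), L (a *: x + y) = a *: L x + L y.

Definition is_dual (X : normedModType R) (g : X -> R) :=
  (forall (a : R) (x y : X), g (a *: x + y) = a * g x + g y) /\ continuous g.

Definition dnorm (X : normedModType R) (g : X -> R) : R :=
  sup [set `|g x| | x in [set x : X | `|x| <= 1]].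

(* reflexivity: the canonical map X -> X^** is onto *)
Definition reflexive_space (X : normedModType R) :=
  forall Phi : (X -> R) -> R,
    (forall (a : R) g h, is_dual g -> is_dual h ->
        Phi (fun x => a * g x + h x) = a * Phi g + Phi h) ->
    (exists C : R, forall g, is_dual g -> `|Phi g| <= C * dnorm g) ->
    exists x : X, forall g, is_dual g -> Phi g = g x.

Definition separable_space (X : normedModType R) :=
  exists s : nat -> X, closure (range s) = setT.

Definition compact_map (X Y : normedModType R) (L : X -> Y) :=
  compact (closure (L @` [set x : X | `|x| <= 1])).

Definition weak_cvg (X : normedModType R) (xs : nat -> X) (x : X) :=
  forall g, is_dual g -> (fun n => g (xs n)) @ \oo --> g x.

(* pseudomonotone operator A : V -> V^*, A v w = <A v, w> *)
Definition pseudomonotone (V : normedModType R) (A : V -> V -> R) :=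
  forall (vs : nat -> V) (v : V), weak_cvg vs v ->
    (limn_esup (fun n => (A (vs n) (vs n - v))%:E) <= 0)%E ->
    forall y : V,
      ((A v (v - y))%:E <= limn_einf (fun n => (A (vs n) (vs n - y))%:E))%E.

Definition locally_lipschitz (U : normedModType R) (J : U -> R) :=
  forall x : U, exists r : R, exists L : R, 0 < r /\
    forall y z : U, `|y - x| < r -> `|z - x| < r -> `|J y - J z| <= L * `|y - z|.

(* Clarke generalized directional derivative
   J^0(x;v) = limsup_{y -> x, lam \downarrow 0} (J(y + lam v) - J y) / lam *)
Definition clarke_dd (U : normedModType R) (J : U -> R) (x v : U) : \bar R :=
  ereal_inf [set ereal_sup
               [set r : \bar R | exists (y : U) (lam : R),
                  [/\ `|y - x| < delta, 0 < lam < delta &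
                      r = ((J (y + lam *: v) - J y) / lam)%:E]]
            | delta in [set delta : R | 0 < delta]].

Definition clarke_subdiff (U : normedModType R) (J : U -> R) (x : U) :
    set (U -> R) :=
  [set xi | is_dual xi /\ forall v : U, ((xi v)%:E <= clarke_dd J x v)%E].


Definition is_inner_product (H : normedModType R) (ip : H -> H -> R) :=
  [/\ forall (a : R) x y z, ip (a *: x + y) z = a * ip x z + ip y z,
      forall x y, ip x y = ip y x &
      forall x, ip x x = `|x| ^+ 2].

Definition intf (V0 : normedModType R) (f : R -> (V0 -> R)) (s e : R) (v : V0) : R :=
  \int[lebesgue_measure]_(t in [set t : R | s <= t <= e]) f t v.

(* the Rothe right-hand sides f_tau^n in V^* (as functionals on V) *)
Definition ftau (V0 : normedModType R) (f : R -> (V0 -> R)) (tau : R) (n : nat)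
    (v : V0) : R :=
  if n == 1%N then tau^-1 * intf f 0 tau v
  else (3 / (2 * tau)) * intf f ((n%:R - 1) * tau) (n%:R * tau) v
       - (2 * tau)^-1 * intf f ((n%:R - 2) * tau) ((n%:R - 1) * tau) v.

(* Problem P_tau: u 0 = u_tau^0 is given; u n, xi n for 1 <= n <= N *)
Definition rothe_solution (V H U : normedModType R) (ip : H -> H -> R)
    (j : V -> H) (A : V -> V -> R) (iota : V -> U) (J : U -> R)
    (f : R -> (V -> R)) (tau : R) (N : nat) (u : nat -> V) (xi : nat -> (U -> R)) :=
  forall n : nat, (1 <= n <= N)%N ->
    clarke_subdiff J (iota (u n)) (xi n) /\
    forall v : V,
      tau^-1 * ip (j (if n == 1%N then u 1%N - u 0%N
                      else (3 / 2 : R) *: u n - 2 *: u n.-1 + (1 / 2 : R) *: u n.-2))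
                  (j v)
      + A (u n) v + xi n (iota v) = ftau f tau n v.

End Defs.

(* Main.v *)
Set Warnings "-notation-overridden,-ambiguous-paths,-notation-incompatible-prefix".
Require Import Defs.
From HB Require Import structures.
From mathcomp Require Import all_boot all_order all_algebra.
From mathcomp Require Import all_classical all_reals all_analysis.
From mathcomp Require Import ring lra measurable_realfun.
Import Order.TTheory GRing.Theory Num.Theory.
Import numFieldNormedType.Exports.
Local Open Scope classical_set_scope.
Local Open Scope ring_scope.
Section Lin.
Context {R : realType}.

Lemma lin0 {X Y : normedModType R} {L : X -> Y} : is_linmap L -> L 0 = 0.
Proof.
move=> hL; have := hL 1 0 0; rewrite !scale1r addr0 => h.
by apply: (@addrI _ (L 0)); rewrite addr0 -h.
Qed.

Lemma linZ {X Y : normedModType R} {L : X -> Y} a x : is_linmap L -> L (a *: x) = a *: L x.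
Proof. by move=> hL; have := hL a x 0; rewrite !addr0 (lin0 hL) addr0. Qed.

Lemma linD {X Y : normedModType R} {L : X -> Y} x y : is_linmap L -> L (x + y) = L x + L y.
Proof. by move=> hL; have := hL 1 x y; rewrite !scale1r. Qed.

Lemma linN {X Y : normedModType R} {L : X -> Y} x : is_linmap L -> L (- x) = - L x.
Proof. by move=> hL; rewrite -scaleN1r (linZ _ _ hL) scaleN1r. Qed.

Lemma linB {X Y : normedModType R} {L : X -> Y} x y : is_linmap L -> L (x - y) = L x - L y.
Proof. by move=> hL; rewrite (linD _ _ hL) (linN _ hL). Qed.

Lemma dual_lin {X : normedModType R} {g : X -> R} : is_dual g -> is_linmap (g : X -> R^o).
Proof. by move=> [hg _] a x y; rewrite hg. Qed.

Lemma lin_bounded {X Y : normedModType R} {L : X -> Y} :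
  is_linmap L -> continuous L -> exists C : R, 0 < C /\ forall x, `|L x| <= C * `|x|.
Proof.
move=> hL cL.
have := cL 0 => /cvgrPdist_lt /(_ 1 ltr01) /=.
rewrite /= nearE => /nbhs_ballP [e /= e0 He].
exists (2 / e); split; first by rewrite divr_gt0.
move=> x; have [->|x0] := eqVneq x 0; first by rewrite (lin0 hL) !normr0 mulr0.
have nx : 0 < `|x| by rewrite normr_gt0.
pose y := (e / (2 * `|x|)) *: x.
have ny : `|y| = e / 2.
  rewrite normrZ ger0_norm; last by rewrite divr_ge0 ?ltW// mulr_gt0.
  by field; rewrite gt_eqF.
have : ball (0 : X) e y.
  rewrite -ball_normE /ball_ /= sub0r normrN ny; lra.
move=> /He; rewrite (lin0 hL) sub0r normrN /y (linZ _ _ hL) normrZ ger0_norm; last first.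
  by rewrite divr_ge0 ?ltW// mulr_gt0.
move=> H; rewrite -(@ler_pM2l _ (e / (2 * `|x|))); last by rewrite divr_gt0// mulr_gt0.
apply: (le_trans (ltW H)); rewrite le_eqVlt; apply/orP; left; apply/eqP; field; by rewrite !gt_eqF.
Qed.

End Lin.
Section Dual.
Context {R : realType}.

Lemma dual_has_sup {X : normedModType R} {g : X -> R} : is_dual g ->
  has_sup [set `|g x| | x in [set x : X | `|x| <= 1]].
Proof.
move=> hg; have [C [C0 HC]] := lin_bounded (dual_lin hg) hg.2.
split; first by exists `|g 0|, 0 => //=; rewrite normr0.
exists C => _ [x /= x1 <-]; apply: (le_trans (HC x)).
by rewrite -[leRHS]mulr1 ler_pM2l.
Qed.

Lemma dnorm_ge0 {X : normedModType R} {g : X -> R} : is_dual g -> 0 <= dnorm g.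
Proof.
move=> hg; apply: (le_trans (normr_ge0 (g 0))).
by apply: (sup_upper_bound (dual_has_sup hg)); exists 0 => //=; rewrite normr0.
Qed.

Lemma dnorm_bound {X : normedModType R} {g : X -> R} : is_dual g ->
  forall x, `|g x| <= dnorm g * `|x|.
Proof.
move=> hg x; have hl := dual_lin hg.
have [->|x0] := eqVneq x 0.
  by rewrite (lin0 hl) !normr0 mulr0.
have nx : 0 < `|x| by rewrite normr_gt0.
have : `|g (`|x|^-1 *: x)| <= dnorm g.
  apply: (sup_upper_bound (dual_has_sup hg)); exists (`|x|^-1 *: x) => //=.
  by rewrite normrZ ger0_norm ?invr_ge0// mulVf ?gt_eqF.
have e1 : g (`|x|^-1 *: x) = `|x|^-1 * g x := linZ _ _ hl.
rewrite e1 normrM ger0_norm ?invr_ge0//.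
by rewrite -ler_pdivrMr// mulrC.
Qed.

End Dual.
Section IP.
Context {R : realType} {H : normedModType R} {ip : H -> H -> R}.
Hypothesis hip : is_inner_product ip.

Lemma ip0l z : ip 0 z = 0.
Proof.
case: hip => hl _ _; have := hl 1 0 0 z; rewrite scale1r addr0 mul1r => h.
by apply: (@addrI _ (ip 0 z)); rewrite addr0 -h.
Qed.

Lemma ipZl a x z : ip (a *: x) z = a * ip x z.
Proof. by case: hip => hl _ _; have := hl a x 0 z; rewrite addr0 ip0l addr0. Qed.

Lemma ipDl x y z : ip (x + y) z = ip x z + ip y z.
Proof. by case: hip => hl _ _; have := hl 1 x y z; rewrite scale1r mul1r. Qed.

Lemma ipDr x y z : ip z (x + y) = ip z x + ip z y.
Proof. by case: hip => _ hs _; rewrite hs ipDl !(hs z). Qed.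

Lemma ipZr a x z : ip z (a *: x) = a * ip z x.
Proof. by case: hip => _ hs _; rewrite hs ipZl (hs z). Qed.

Lemma ipxx x : ip x x = `|x| ^+ 2.
Proof. by case: hip. Qed.

Lemma ip_CS x y : `|ip x y| <= `|x| * `|y|.
Proof.
have key : forall s t : R, 0 <= s ^+ 2 * `|x| ^+ 2 + 2 * s * t * ip x y + t ^+ 2 * `|y| ^+ 2.
  move=> s t; have := sqr_ge0 `|s *: x + t *: y|; rewrite -(ipxx (s *: x + t *: y)).
  rewrite !ipDl !ipDr !ipZl !ipZr !ipxx.
  case: hip => _ hs _; rewrite (hs y x); move=> h; apply: (le_trans h); rewrite le_eqVlt; apply/orP; left; apply/eqP; ring.
have [x0|x0] := eqVneq `|x| 0.
  move: x0 => /normr0_eq0 ->; rewrite ip0l !normr0 mul0r //.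
have [y0|y0] := eqVneq `|y| 0.
  move: y0 => /normr0_eq0 ->; case: hip => _ hs _; rewrite hs ip0l !normr0 mulr0 //.
have px : 0 < `|x| by rewrite lt_def x0 normr_ge0.
have py : 0 < `|y| by rewrite lt_def y0 normr_ge0.
have pxy : 0 < `|x| * `|y| by rewrite mulr_gt0.
have k1 := key `|y| (- `|x|).
have k2 := key `|y| `|x|.
rewrite ler_norml; apply/andP; split.
  nra.
nra.
Qed.

End IP.
Section Ehrling.
Context {R : realType}.

Lemma ehrling {V Z H : normedModType R} (jVZ : V -> Z) (jZH : Z -> H) :
  is_linmap jVZ -> continuous jVZ -> compact_map jVZ ->
  is_linmap jZH -> injective jZH -> continuous jZH ->
  forall eps : R, 0 < eps -> exists C : R, 0 <= C /\
    forall v, `|jVZ v| <= eps * `|v| + C * `|jZH (jVZ v)|.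
Proof.
move=> l1 c1 k1 l2 i2 c2 eps eps0.
have [ok|nC] := pselect (exists C : R, 0 <= C /\
    forall v, `|jVZ v| <= eps * `|v| + C * `|jZH (jVZ v)|); first exact: ok.
have hn : forall n : nat, exists w, `|w| <= 1 /\
    eps + n%:R * `|jZH (jVZ w)| < `|jVZ w|.
  move=> n; have [v hv] : exists v, eps * `|v| + n%:R * `|jZH (jVZ v)| < `|jVZ v|.
    apply: contrapT => hne; apply: nC; exists n%:R; split; first exact: ler0n.
    move=> v; rewrite leNgt; apply/negP => hlt; apply: hne; exists v; exact: hlt.
  have v0 : v != 0.
    apply/negP => /eqP v0; move: hv; rewrite v0 (lin0 l1) (lin0 l2) !normr0.
    by rewrite !mulr0 addr0 ltxx.
  have nv : 0 < `|v| by rewrite normr_gt0.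
  exists (`|v|^-1 *: v); split.
    by rewrite normrZ ger0_norm ?invr_ge0// mulVf ?gt_eqF.
  rewrite (linZ _ _ l1) (linZ _ _ l2) !normrZ ger0_norm ?invr_ge0//.
  rewrite -(@ltr_pM2l _ `|v|)//.
  have e c : `|v| * (`|v|^-1 * c) = c by rewrite mulrA mulfV ?gt_eqF// mul1r.
  by rewrite mulrDr (mulrCA `|v| n%:R) !e (mulrC `|v| eps).
have [ws hws] := choice hn.
pose z n := jVZ (ws n).
have [M [M0 HM]] := lin_bounded l1 c1.
have zM : forall n, `|z n| <= M.
  move=> n; apply: (le_trans (HM _)); rewrite -[leRHS]mulr1 ler_pM2l//.
  exact: (hws n).1.
have zK : forall n, closure (jVZ @` [set x : V | `|x| <= 1]) (z n).
  move=> n; apply: subset_closure; exists (ws n) => //; exact: (hws n).1.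
have FK : (z @ \oo) (closure (jVZ @` [set x : V | `|x| <= 1])).
  rewrite /=. exists 0%N => // n _; exact: zK.
have [p [Kp clp]] := k1 (z @ \oo) _ FK.
have jp : jZH p = 0.
  apply/eqP; rewrite -normr_le0; apply/ler_addgt0Pr => eta eta0; rewrite add0r.
  have eta2 : 0 < eta / 2 by rewrite divr_gt0.
  have hB : \forall q \near p, `|jZH p - jZH q| < eta / 2.
    by have := c2 p; move/cvgrPdist_lt => /(_ _ eta2).
  pose n0 := (Num.bound ((eta / 2)^-1 * M)).+1.
  have hA : (z @ \oo) [set q | `|jZH q| < eta / 2].
    rewrite /=; exists n0 => // n /= hn0.
    have : n%:R * `|jZH (z n)| < M.
      apply: (le_lt_trans _ (lt_le_trans (hws n).2 (zM n))).
      by rewrite lerDr ltW.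
    have n0p : 0 < n%:R :> R by rewrite ltr0n (leq_trans _ hn0).
    rewrite -ltr_pdivlMl// => h; apply: (lt_trans h).
    rewrite ltr_pdivrMl// -ltr_pdivrMr// mulrC.
    apply: (lt_le_trans (archi_boundP _)); first by rewrite mulr_ge0 ?invr_ge0 ?ltW.
    by rewrite ler_nat (leq_trans _ hn0).
  have [q [/= hq1 hq2]] := clp _ _ hA hB.
  have := ler_normD (jZH p - jZH q) (jZH q); rewrite subrK => h.
  apply: (le_trans h); apply: ltW; rewrite [eta]splitr; exact: ltrD.
have p0 : p = 0 by apply: i2; rewrite jp (lin0 l2).
have hA : (z @ \oo) [set q | eps <= `|q|].
  exists 0%N => // n _ /=; apply: ltW; apply: (le_lt_trans _ (hws n).2).
  by rewrite lerDl mulr_ge0.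
have hB : \forall q \near p, `|q| < eps by rewrite p0; exact: nbhs0_lt.
have [q [/= hq1 hq2]] := clp _ _ hA hB.
by move: (le_lt_trans hq1 hq2); rewrite ltxx.
Qed.

End Ehrling.
Section Majorant.
Context {R : realType}.

Lemma majorant {V : normedModType R} (f : R -> V -> R) (D : set R) :
  separable_space V -> (forall t, is_dual (f t)) ->
  (forall v, measurable_fun D (fun t => f t v)) ->
  exists g : R -> R, [/\ measurable_fun D g, (forall t, 0 <= g t),
    (forall t, g t <= dnorm (f t)) & (forall t v, `|f t v| <= g t * `|v|)].
Proof.
move=> [s hs] hd hm.
pose phi k t := `|f t (s k)| / `|s k|.
have mphi : forall k, measurable_fun D (phi k).
  move=> k; apply: measurable_funM; last exact: measurable_cst.
  by apply: measurableT_comp => //; exact: hm.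
have phid : forall k t, phi k t <= dnorm (f t).
  move=> k t; rewrite /phi; have [->|sk0] := eqVneq (s k) 0.
    by rewrite normr0 invr0 mulr0 (dnorm_ge0 (hd t)).
  by rewrite ler_pdivrMr ?normr_gt0 //; exact: dnorm_bound.
pose fix m (n : nat) (t : R) {struct n} : R := if n is n'.+1 then Num.max (m n' t) (phi n' t) else 0.
have mm : forall n, measurable_fun D (m n).
  elim=> [|n IH]; first exact: measurable_cst.
  exact: measurable_maxr.
have mnd : forall t, nondecreasing_seq (fun n => m n t).
  by move=> t; apply/nondecreasing_seqP => n /=; rewrite le_max lexx.
have mub : forall t n, m n t <= dnorm (f t).
  move=> t; elim=> [|n IH] /=; first exact: dnorm_ge0.
  by rewrite ge_max IH phid.
have hub : forall t, has_ubound (range (fun n => m n t)).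
  by move=> t; exists (dnorm (f t)) => _ [n _ <-].
pose g t := sup (range (fun n => m n t)).
have gcvg : forall t, (fun n => m n t) @ \oo --> g t.
  by move=> t; apply: nondecreasing_cvgn.
have mg : forall t n, m n t <= g t.
  move=> t n; apply: (sup_upper_bound _); last by exists n.
  by split; [exists (m 0%N t), 0%N|exact: hub].
have g0 : forall t, 0 <= g t by move=> t; exact: (mg t 0%N).
have gs : forall t k, `|f t (s k)| <= g t * `|s k|.
  move=> t k; have [->|sk0] := eqVneq (s k) 0.
    by rewrite (lin0 (dual_lin (hd t))) !normr0 mulr0.
  rewrite -ler_pdivrMr ?normr_gt0//; apply: (le_trans _ (mg t k.+1)).
  by rewrite /= le_max lexx orbT.
exists g; split => //.
- exact: (measurable_fun_cvg mm (fun t _ => gcvg t)).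
- move=> t; apply: ge_sup; first by exists (m 0%N t), 0%N.
  by move=> _ [n _ <-].
move=> t v; rewrite leNgt; apply/negP => hlt.
set del := `|f t v| - g t * `|v|.
have del0 : 0 < del by rewrite subr_gt0.
have e0 : 0 < del / (2 * (g t + 1)) by rewrite divr_gt0 // mulr_gt0 // ltr_wpDl.
have d20 : 0 < del / 2 by rewrite divr_gt0.
have B1 : \forall x \near v, `|f t v - f t x| < del / 2.
  by have := (hd t).2 v; move/cvgrPdist_lt => /(_ _ d20).
have B2 : \forall x \near v, `|v - x| < del / (2 * (g t + 1)).
  by have := @cvg_id _ (nbhs v); move/cvgrPdist_lt => /(_ _ e0).
have : closure (range s) v by rewrite hs.
move=> /(_ _ (filterI B1 B2)) [_ [[k _ <-] [/= h1 h2]]].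
have := gs t k.
have n1 : `|f t v| - del / 2 < `|f t (s k)|.
  have := ler_normD (f t v - f t (s k)) (f t (s k)); rewrite subrK. lra.
have n2 : `|s k| <= `|v| + del / (2 * (g t + 1)).
  have := ler_normD (s k - v) v; rewrite subrK distrC; lra.
have n3 : g t * `|s k| <= g t * `|v| + del / 2.
  apply: (le_trans (ler_wpM2l (g0 t) n2)); rewrite mulrDr lerD2l.
  have g1 : g t + 1 != 0 by rewrite gt_eqF // ltr_wpDl.
  rewrite (_ : g t * (del / (2 * (g t + 1))) = del / 2 - del / (2 * (g t + 1))).
    lra.
  by field.
rewrite /del in n1 n3 *; lra.
Qed.

End Majorant.
Section Integ.
Context {R : realType}.

Lemma lower_le_integral d (T : measurableType d) (mu : {measure set T -> \bar R})
  (D : set T) (f1 f2 : T -> \bar R) :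
  (forall x, D x -> (0 <= f1 x)%E) -> (forall x, D x -> (f1 x <= f2 x)%E) ->
  (\int[mu]_(x in D) f1 x <= \int[mu]_(x in D) f2 x)%E.
Proof.
move=> f10 f12.
have f20 : forall x, D x -> (0 <= f2 x)%E by move=> x Dx; exact: le_trans (f10 x Dx) (f12 x Dx).
rewrite (ge0_integralE _ f10) (ge0_integralE _ f20) /=.
apply: ereal_sup_le => _ [h /= hh <-]; exists h => //= x.
apply: (le_trans (hh x)); rewrite /patch; case: ifP => // /set_mem Dx.
exact: f12.
Qed.

End Integ.
Section Integ2.
Context {R : realType}.
Local Notation mu := (@lebesgue_measure R).

Lemma mDab (a b : R) : measurable [set t : R | a <= t <= b].
Proof. by rewrite -set_itvcc; exact: measurable_itv. Qed.

Lemma muDab (a b : R) : a <= b -> mu [set t : R | a <= t <= b] = (b - a)%:E.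
Proof.
move=> ab; rewrite -set_itvcc lebesgue_measure_itv /= lte_fin.
case: ifPn => [_|]; first by rewrite EFinB.
rewrite -leNgt => ba; have -> : b = a by apply/le_anti/andP.
by rewrite subrr.
Qed.

Lemma intf_bound {T tau c r : R} {g phi : R -> R} :
  0 < tau <= T -> 0 < c -> 0 <= r ->
  measurable_fun [set t : R | 0 <= t <= T] g -> (forall t, 0 <= g t) ->
  (\int[mu]_(t in [set t : R | (0 <= t <= T)%R]) ((g t) ^+ 2)%:E < +oo)%E ->
  measurable_fun [set t : R | 0 <= t <= T] phi -> (forall t, `|phi t| <= g t * r) ->
  `|\int[mu]_(t in [set t : R | 0 <= t <= tau]) phi t| <=
    c * tau * r ^+ 2 + (4 * c)^-1 * (\int[mu]_(t in [set t : R | 0 <= t <= tau]) (g t ^+ 2)).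
Proof.
move=> /andP[tau0 tauT] c0 r0 mg g0 ig mphi hphi.
set Dt := [set t : R | 0 <= t <= tau].
have mDt : measurable Dt by exact: mDab.
have sub : Dt `<=` [set t : R | 0 <= t <= T].
  by move=> t /= /andP[-> /le_trans]; apply.
have mg2 : measurable_fun Dt (fun t => g t ^+ 2).
  by apply: measurable_funX; exact: measurable_funS (mDab 0 T) sub mg.
have ig2 : mu.-integrable Dt (EFin \o (fun t => g t ^+ 2)).
  apply/integrableP; split; first exact/measurable_EFinP.
  apply: le_lt_trans ig; apply: (@le_trans _ _ (\int[mu]_(t in Dt) ((g t) ^+ 2)%:E)%E).
    rewrite le_eqVlt; apply/orP; left; apply/eqP; apply: eq_integral => t _ /=.
    by rewrite ger0_norm // sqr_ge0.
  apply: (@ge0_subset_integral _ _ _ mu _ _ mDt (mDab 0 T)) => //.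
    by apply/measurable_EFinP; exact: measurable_funX.
  by move=> t _; rewrite lee_fin sqr_ge0.
have icst : mu.-integrable Dt (EFin \o (fun _ : R => c * r ^+ 2)).
  apply/integrableP; split; first exact/measurable_EFinP/measurable_cst.
  rewrite integral_cst //= muDab; last exact: ltW.
  by rewrite -EFinM ltry.
pose psi t := c * r ^+ 2 + (4 * c)^-1 * g t ^+ 2.
have ipsi : mu.-integrable Dt (EFin \o psi).
  rewrite (_ : EFin \o psi = (EFin \o (fun _ => c * r ^+ 2)) \+ (fun t => (((4 * c)^-1)%:E * (EFin \o (fun t => (g t ^+ 2)%R)) t)%E)).
    by apply: integrableD => //; exact: integrableZl.
  by apply/funext => t /=; rewrite /psi EFinD EFinM.
have hpsi : forall t, `|phi t| <= psi t.
  move=> t; apply: (le_trans (hphi t)); rewrite /psi.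
  have c4 : 0 < 4 * c by rewrite mulr_gt0.
  have e : c * r ^+ 2 + (4 * c)^-1 * g t ^+ 2 - g t * r = (4 * c)^-1 * (2 * c * r - g t) ^+ 2.
    by field; rewrite gt_eqF.
  by rewrite -subr_ge0 e mulr_ge0 ?invr_ge0 ?sqr_ge0 // ltW.
have mphit : measurable_fun Dt phi by exact: measurable_funS (mDab 0 T) sub mphi.
have iphi : mu.-integrable Dt (EFin \o phi).
  apply: le_integrable ipsi => //; first exact/measurable_EFinP.
  move=> t _ /=; rewrite lee_fin; apply: (le_trans (hpsi t)).
  exact: ler_norm.
have iaphi : mu.-integrable Dt (EFin \o (fun t => `|phi t|)).
  apply: le_integrable ipsi => //; first by apply/measurable_EFinP; exact: measurableT_comp.
  move=> t _ /=; rewrite lee_fin normr_id; apply: (le_trans (hpsi t)).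
  exact: ler_norm.
apply: (le_trans (le_normr_Rintegral _ _)) => //.
apply: (le_trans (le_Rintegral _ iaphi ipsi _)) => //.
have ik : mu.-integrable Dt (EFin \o (fun t => (4*c)^-1 * g t ^+ 2)).
  rewrite (_ : EFin \o _ = (fun t => ((4*c)^-1)%:E * (EFin \o (fun t => (g t ^+ 2)%R)) t)%E).
    exact: integrableZl.
  by apply/funext => t /=; rewrite EFinM.
rewrite /psi (@RintegralD _ _ _ mu _ _ _ mDt icst ik) Rintegral_cst // (@RintegralZl _ _ _ mu _ _ _ mDt ig2).
have -> : fine (mu Dt) = tau.
  transitivity (fine ((tau - 0)%:E)); last by rewrite subr0.
  by congr fine; exact: (muDab 0 tau (ltW tau0)).
by rewrite mulrAC.
Qed.

End Integ2.
Section Conv.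
Context {R : realType}.
Local Notation mu := (@lebesgue_measure R).

Lemma cvg_T_over_N (T : R) : 0 < T -> (fun N : nat => T / N%:R) @ \oo --> (0 : R).
Proof.
move=> T0; apply/cvgrPdist_lt => e e0.
exists (Num.bound (T / e)).+1 => // N /= hN.
have N0 : 0 < N%:R :> R by rewrite ltr0n (leq_trans _ hN).
rewrite sub0r normrN ger0_norm ?divr_ge0 ?ltW//.
rewrite ltr_pdivrMr// mulrC -ltr_pdivrMr//.
apply: (lt_le_trans (archi_boundP _)); first by rewrite divr_ge0 ?ltW.
by rewrite ler_nat (leq_trans _ hN).
Qed.

Lemma E_cvg (T : R) (g : R -> R) : 0 < T ->
  measurable_fun [set t : R | 0 <= t <= T] g ->
  (\int[mu]_(t in [set t : R | (0 <= t <= T)%R]) ((g t) ^+ 2)%:E < +oo)%E ->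
  (fun N : nat => \int[mu]_(t in [set t : R | 0 <= t <= T / N%:R]) (g t ^+ 2)) @ \oo --> (0 : R).
Proof.
move=> T0 mg ig.
have ig2 : mu.-integrable `[0, T] (EFin \o (fun t => g t ^+ 2)).
  rewrite set_itvcc; apply/integrableP; split.
    by apply/measurable_EFinP; exact: measurable_funX.
  apply: le_lt_trans ig; rewrite le_eqVlt; apply/orP; left; apply/eqP.
  by apply: eq_integral => t _ /=; rewrite ger0_norm // sqr_ge0.
have := parameterized_integral_cvg_left T0 ig2.
move=> h; have := cvg_comp _ _ (cvg_T_over_N T T0) h.
by rewrite /parameterized_integral /comp; under eq_fun do rewrite set_itvcc.
Qed.

End Conv.
Section Arith.
Context {R : realType}.

Lemma young_lin (al L X : R) : 0 < al -> L * X <= al / 4 * X ^+ 2 + L ^+ 2 / al.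
Proof.
move=> a0.
have e : al / 4 * X ^+ 2 + L ^+ 2 / al - L * X = (al * X - 2 * L) ^+ 2 / (4 * al).
  by field; rewrite gt_eqF.
by rewrite -subr_ge0 e divr_ge0 ?sqr_ge0 // ltW // mulr_gt0.
Qed.

Definition c7 (beta d Q C1 : R) := beta + 2 * d * C1 ^+ 2 + d * (1 + Q) * C1 / 2.
Definition c5 (alpha beta a b d K Q eps1 C1 Mu : R) :=
  2 * c7 beta d Q C1 * Mu ^+ 2 + a * K + d * Q + alpha / 4 * K ^+ 2
  + (b * K + d * (1 + Q) * eps1) ^+ 2 / alpha + d * (1 + Q) * C1 / 2.

Lemma c7_ge0 (beta d Q C1 : R) : 0 <= beta -> 0 < d -> 0 <= Q -> 0 <= C1 ->
  0 <= c7 beta d Q C1.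
Proof.
move=> b0 d0 Q0 C0; rewrite /c7.
have h1 : 0 <= 2 * d * C1 ^+ 2 by rewrite mulr_ge0 ?sqr_ge0 // mulr_ge0 // ltW.
have h2 : 0 <= d * (1 + Q) * C1 / 2.
  by rewrite divr_ge0 // mulr_ge0 // mulr_ge0 ?addr_ge0 // ltW.
lra.
Qed.

Lemma main_arith {alpha beta a b d K Q eps1 C1 Mu tau E S X Y P Dd I A1 Xi ip1 : R} :
  0 < alpha -> 0 <= beta -> 0 <= a -> 0 <= b -> 0 < d -> 0 <= K -> 0 <= Q ->
  0 <= eps1 -> 0 <= C1 -> 0 <= Mu -> 0 < tau -> 0 <= S -> 0 <= X -> 0 <= Y ->
  0 <= P ->
  tau^-1 * ip1 + A1 + Xi = tau^-1 * I ->
  S ^+ 2 - S * Dd <= ip1 ->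
  alpha * X ^+ 2 - beta * Y ^+ 2 - (a + b * X) * K <= A1 ->
  - (d * (1 + P) * (P + Q)) <= Xi ->
  I <= alpha / 8 * tau * (X + K) ^+ 2 + 2 / alpha * E ->
  P <= eps1 * X + C1 * Y ->
  2 * d * eps1 ^+ 2 <= alpha / 4 ->
  Y <= S + Mu ->
  S ^+ 2 <= S * Dd + tau * (c5 alpha beta a b d K Q eps1 C1 Mu
                            + 2 * c7 beta d Q C1 * S ^+ 2) + 2 / alpha * E.
Proof.
move=> a0 b0 aa0 bb0 d0 K0 Q0 e0 C0 M0 t0 S0 X0 Y0 P0 heq hip hA hXi hI hP he hY.
have heq' : ip1 + tau * A1 + tau * Xi = I.
  have := congr1 (fun x => tau * x) heq; rewrite /= !mulrDr !mulrA mulfV ?gt_eqF// !mul1r.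
  by [].
set L := b * K + d * (1 + Q) * eps1.
have hY2 : Y ^+ 2 <= 2 * S ^+ 2 + 2 * Mu ^+ 2.
  have : Y ^+ 2 <= (S + Mu) ^+ 2 by rewrite ler_sqr ?nnegrE ?addr_ge0.
  have := sqr_ge0 (S - Mu); nra.
have hP2 : d * P ^+ 2 <= alpha / 4 * X ^+ 2 + 2 * d * C1 ^+ 2 * Y ^+ 2.
  have : P ^+ 2 <= (eps1 * X + C1 * Y) ^+ 2 by rewrite ler_sqr ?nnegrE ?addr_ge0 ?mulr_ge0.
  have := sqr_ge0 (eps1 * X - C1 * Y).
  move=> h1 h2.
  have h3 : P ^+ 2 <= 2 * eps1 ^+ 2 * X ^+ 2 + 2 * C1 ^+ 2 * Y ^+ 2 by nra.
  have h4 : d * P ^+ 2 <= d * (2 * eps1 ^+ 2 * X ^+ 2 + 2 * C1 ^+ 2 * Y ^+ 2).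
    by rewrite ler_wpM2l // ltW.
  have h5 : 2 * d * eps1 ^+ 2 * X ^+ 2 <= alpha / 4 * X ^+ 2.
    by rewrite ler_wpM2r // sqr_ge0.
  nra.
have hPl : d * (1 + Q) * P <= d * (1 + Q) * eps1 * X + d * (1 + Q) * C1 * Y.
  have : 0 <= d * (1 + Q) by rewrite mulr_ge0 ?addr_ge0 // ltW.
  move=> h; have := ler_wpM2l h hP; nra.
have hLX : L * X <= alpha / 4 * X ^+ 2 + L ^+ 2 / alpha := young_lin alpha L X a0.
have hCY : d * (1 + Q) * C1 * Y <= d * (1 + Q) * C1 / 2 + d * (1 + Q) * C1 / 2 * Y ^+ 2.
  have h : 0 <= d * (1 + Q) * C1 / 2 by rewrite divr_ge0 // mulr_ge0 // mulr_ge0 ?addr_ge0 // ltW.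
  have := sqr_ge0 (Y - 1); nra.
have hXK : (X + K) ^+ 2 <= 2 * X ^+ 2 + 2 * K ^+ 2.
  have := sqr_ge0 (X - K); nra.
have Phi : - alpha * X ^+ 2 + beta * Y ^+ 2 + (a + b * X) * K + d * (1 + P) * (P + Q)
    + alpha / 8 * (X + K) ^+ 2 <= c5 alpha beta a b d K Q eps1 C1 Mu
                            + 2 * c7 beta d Q C1 * S ^+ 2.
  rewrite /c5 /c7 -/L.
  have hc7 : 0 <= beta + 2 * d * C1 ^+ 2 + d * (1 + Q) * C1 / 2.
    by rewrite !addr_ge0 // ?mulr_ge0 // ?divr_ge0 // ?mulr_ge0 // ?addr_ge0 // ltW.
  have hY3 : (beta + 2 * d * C1 ^+ 2 + d * (1 + Q) * C1 / 2) * Y ^+ 2 <=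
      (beta + 2 * d * C1 ^+ 2 + d * (1 + Q) * C1 / 2) * (2 * S ^+ 2 + 2 * Mu ^+ 2).
    exact: ler_wpM2l.
  have hXK' : alpha / 8 * (X + K) ^+ 2 <= alpha / 8 * (2 * X ^+ 2 + 2 * K ^+ 2).
    by rewrite ler_wpM2l // divr_ge0 // ltW.
  rewrite /L in hLX *.
  have hx2 : 0 <= alpha * X ^+ 2 by rewrite mulr_ge0 ?sqr_ge0 // ltW.
  lra.
have hT : tau * (- alpha * X ^+ 2 + beta * Y ^+ 2 + (a + b * X) * K + d * (1 + P) * (P + Q)
    + alpha / 8 * (X + K) ^+ 2) <= tau * (c5 alpha beta a b d K Q eps1 C1 Mu
                            + 2 * c7 beta d Q C1 * S ^+ 2).
  by rewrite ler_wpM2l // ltW.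
have hA' : tau * (alpha * X ^+ 2 - beta * Y ^+ 2 - (a + b * X) * K) <= tau * A1.
  by rewrite ler_wpM2l // ltW.
have hXi' : tau * (- (d * (1 + P) * (P + Q))) <= tau * Xi.
  by rewrite ler_wpM2l // ltW.
nra.
Qed.

Lemma final_arith {S Dd tau c5v c6 E2 eps : R} :
  0 <= S -> 0 < eps -> 0 <= tau -> 0 <= c6 ->
  S ^+ 2 <= S * Dd + tau * (c5v + c6 * S ^+ 2) + E2 ->
  tau * c6 <= 1 / 2 -> tau * c5v + E2 <= eps ^+ 2 / 8 -> Dd <= eps / 4 ->
  S < eps.
Proof.
move=> S0 e0 t0 c0 h h1 h2 h3.
rewrite ltNge; apply/negP => hS.
have a1 : S * Dd <= S * (eps / 4) by rewrite ler_wpM2l.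
have a2 : tau * c6 * S ^+ 2 <= 1 / 2 * S ^+ 2 by rewrite ler_wpM2r ?sqr_ge0.
have a3 : eps ^+ 2 <= S ^+ 2 by rewrite ler_sqr ?nnegrE // ltW.
have a4 : S * eps <= S ^+ 2 by rewrite expr2 ler_wpM2l.
nra.
Qed.

Lemma choose_eps (al d C : R) : 0 < al -> 0 < d -> 0 <= C ->
  let e := al / (8 * d * C ^+ 2 + al) in 0 < e /\ 2 * d * (C * e) ^+ 2 <= al / 4.
Proof.
move=> a0 d0 C0 e.
have den : 0 < 8 * d * C ^+ 2 + al by rewrite ltr_wpDl // mulr_ge0 ?sqr_ge0 // mulr_ge0 // ltW.
have e0 : 0 < e by rewrite divr_gt0.
have e1 : e <= 1 by rewrite ler_pdivrMr // mul1r lerDr mulr_ge0 ?sqr_ge0 // mulr_ge0 // ltW.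
split => //.
have h : e * (8 * d * C ^+ 2 + al) = al by rewrite /e mulfVK // gt_eqF.
have hdc : 0 <= d * C ^+ 2 by rewrite mulr_ge0 ?sqr_ge0 // ltW.
have : d * C ^+ 2 * e ^+ 2 <= d * C ^+ 2 * e.
  rewrite ler_wpM2l // expr2 -[leRHS]mulr1 ler_wpM2l // ltW //.
rewrite exprMn; nra.
Qed.

End Arith.

Section Arith2.
Context {R : realType}.
Lemma small_mul (t c r : R) : 0 <= t -> 0 <= c -> 0 < r -> `|0 - t| < r / (c + 1) -> t * c <= r.
Proof.
move=> t0 c0 r0; rewrite sub0r normrN ger0_norm // => h.
have c1 : c + 1 != 0 by rewrite gt_eqF // ltr_wpDl.
have e : r / (c + 1) * c = r - r / (c + 1) by field.
have h1 : t * c <= r / (c + 1) * c by rewrite ler_wpM2r // ltW.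
have h2 : 0 < r / (c + 1) by rewrite divr_gt0 // ltr_wpDl.
lra.
Qed.
End Arith2.
Theorem lemma4p2 (R : realType)
  (V H Z U : completeNormedModType R)
  (ip : H -> H -> R) (j : V -> H)
  (jVZ : V -> Z) (jZH : Z -> H) (iota2 : Z -> U) (iota : V -> U)
  (A : V -> V -> R) (a b alpha beta : R)
  (J : U -> R) (d : R)
  (T : R) (f : R -> (V -> R)) (u0 : H) (u0tau : nat -> V)
  (u : nat -> nat -> V) (xi : nat -> nat -> (U -> R)) :
  (* V: real reflexive separable Banach space *)
  reflexive_space V -> separable_space V ->
  (* H: real separable Hilbert space *)
  is_inner_product ip -> separable_space H ->
  (* V subset H: dense, continuous, compact embedding *)
  is_linmap j -> injective j -> continuous j ->
  closure (range j) = setT -> compact_map j ->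
  (* H subset V^star: h |-> (v |-> (h, v)) is injective with dense range *)
  (forall h : H, (forall v : V, ip h (j v) = 0) -> h = 0) ->
  (forall g : V -> R, is_dual g -> forall e : R, 0 < e ->
     exists h : H, dnorm (fun v => g v - ip h (j v)) < e) ->
  (* U: reflexive Banach space *)
  reflexive_space U ->
  (* H(A) *)
  (forall v : V, is_dual (A v)) -> pseudomonotone A ->
  0 <= a -> 0 < b -> (forall v : V, dnorm (A v) <= a + b * `|v|) ->
  0 < alpha -> 0 <= beta ->
  (forall v : V, A v v >= alpha * `|v| ^+ 2 - beta * `|j v| ^+ 2) ->
  (* H(J) *)
  locally_lipschitz J -> 0 < d ->
  (forall (w : U) (zeta : U -> R), clarke_subdiff J w zeta ->
     dnorm zeta <= d * (1 + `|w|)) ->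
  (* H(iota) *)
  is_linmap iota -> continuous iota -> compact_map iota ->
  is_linmap jVZ -> injective jVZ -> continuous jVZ -> compact_map jVZ ->
  is_linmap jZH -> injective jZH -> continuous jZH ->
  (forall v : V, jZH (jVZ v) = j v) ->
  is_linmap iota2 -> continuous iota2 ->
  (forall v : V, iota v = iota2 (jVZ v)) ->
  (* H(f): f in L^2(0,T;V^star) *)
  0 < T ->
  (forall t : R, is_dual (f t)) ->
  (forall v : V, measurable_fun [set t : R | 0 <= t <= T] (fun t => f t v)) ->
  (\int[lebesgue_measure]_(t in [set t : R | (0 <= t <= T)%R])
      ((dnorm (f t)) ^+ 2)%:E < +oo)%E ->
  (* initial data u_tau^0 (tau = T/N) *)
  ((fun N => j (u0tau N)) @ \oo --> u0) ->
  (exists c0 : R, forall N : nat, (0 < N)%N ->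
     `|u0tau N| <= c0 / Num.sqrt (T / N%:R)) ->
  (* for all sufficiently small tau = T/N, (u N, xi N) solves Problem P_tau *)
  (exists N0 : nat, forall N : nat, (N0 <= N)%N -> (0 < N)%N ->
     u N 0%N = u0tau N /\
     rothe_solution ip j A iota J f (T / N%:R) N (u N) (xi N)) ->
  (fun N => j (u N 1%N - u N 0%N)) @ \oo --> (0 : H).
Proof.
move=> hVrefl hVsep hip hHsep jlin jinj jcont jdense jcomp hHinj hHdense hUrefl
  hAd hApm ha hb hAb halpha hbeta hAcoer hJlip hd hJb iotalin iotacont iotacomp
  jVZlin jVZinj jVZcont jVZcomp jZHlin jZHinj jZHcont hjcomp iota2lin iota2cont
  hiota hT hfd hfm hfint hu0 hc0 [N0 hsol].
have [g [mg g0 gd gb]] := majorant f _ hVsep hfd hfm.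
have ig : (\int[lebesgue_measure]_(t in [set t : R | (0 <= t <= T)%R]) ((g t) ^+ 2)%:E < +oo)%E.
  apply: le_lt_trans hfint; apply: lower_le_integral => t _.
    by rewrite lee_fin sqr_ge0.
  by rewrite lee_fin ler_sqr ?nnegrE ?(dnorm_ge0 (hfd t)).
have Econv := E_cvg _ _ hT mg ig.
have [Ci2 [Ci20 hCi2]] := lin_bounded iota2lin iota2cont.
set eps' := alpha / (8 * d * Ci2 ^+ 2 + alpha).
have [e'0 he'] : 0 < eps' /\ 2 * d * (Ci2 * eps') ^+ 2 <= alpha / 4 :=
  choose_eps alpha d Ci2 halpha hd (ltW Ci20).
have [Ce [Ce0 hCe]] := ehrling _ _ jVZlin jVZcont jVZcomp jZHlin jZHinj jZHcont _ e'0.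
have hP : forall v, `|iota v| <= (Ci2 * eps') * `|v| + (Ci2 * Ce) * `|j v|.
  move=> v; rewrite hiota -hjcomp; apply: (le_trans (hCi2 _)).
  rewrite -(mulrA Ci2 eps') -(mulrA Ci2 Ce) -mulrDr.
  by apply: ler_wpM2l; [exact: ltW | exact: hCe].
apply/cvgrPdist_lt => eps eps0.
set delta := eps / 8.
have delta0 : 0 < delta by rewrite divr_gt0.
have Bz : \forall x \near u0, `|u0 - x| < delta.
  by have := @cvg_id _ (nbhs u0); move/cvgrPdist_lt => /(_ _ delta0).
have : closure (range j) u0 by rewrite jdense.
move=> /(_ _ Bz) [_ [[z _ <-] /= hz]].
set K := `|z|.
set Q := `|iota z|.
set eps1 := Ci2 * eps'.
set C1 := Ci2 * Ce.
set Mu := `|u0| + delta.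
set c5v := c5 alpha beta a b d K Q eps1 C1 Mu.
set c6 := 2 * c7 beta d Q C1.
have C10 : 0 <= C1 by rewrite /C1 mulr_ge0 // ltW.
have c60 : 0 <= c6 := mulr_ge0 (ler0n _ 2) (c7_ge0 _ _ _ _ hbeta hd (normr_ge0 _) C10).
have F1 : \forall N \near \oo, (N0 <= N)%N by exact: nbhs_infty_ge.
have F1' : \forall N \near \oo, (1 <= N)%N by exact: nbhs_infty_ge.
have F2 : \forall N \near \oo, `|u0 - j (u0tau N)| < delta.
  by move/cvgrPdist_lt : hu0 => /(_ _ delta0).
have r3a : 0 < (1 / 2) / (c6 + 1) by rewrite divr_gt0 // ltr_wpDl.
have r3b : 0 < (eps ^+ 2 / 16) / (`|c5v| + 1) by rewrite divr_gt0 ?divr_gt0 ?exprn_gt0 // ltr_wpDl.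
have F3a : \forall N \near \oo, `|0 - T / N%:R| < (1 / 2) / (c6 + 1).
  by move/cvgrPdist_lt : (cvg_T_over_N _ hT) => /(_ _ r3a).
have F3b : \forall N \near \oo, `|0 - T / N%:R| < (eps ^+ 2 / 16) / (`|c5v| + 1).
  by move/cvgrPdist_lt : (cvg_T_over_N _ hT) => /(_ _ r3b).
have r4 : 0 < alpha * eps ^+ 2 / 32 by rewrite divr_gt0 // mulr_gt0 // exprn_gt0.
have F4 : \forall N \near \oo, `|0 - \int[lebesgue_measure]_(t in [set t : R | 0 <= t <= T / N%:R]) (g t ^+ 2)| < alpha * eps ^+ 2 / 32.
  by move/cvgrPdist_lt : Econv => /(_ _ r4).
near=> N.
have hN0 : (N0 <= N)%N by near: N; exact: F1.
have hN1 : (1 <= N)%N by near: N; exact: F1'.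
have h2 : `|u0 - j (u0tau N)| < delta by near: N; exact: F2.
have h3a : `|0 - T / N%:R| < (1 / 2) / (c6 + 1) by near: N; exact: F3a.
have h3b : `|0 - T / N%:R| < (eps ^+ 2 / 16) / (`|c5v| + 1) by near: N; exact: F3b.
have h4 : `|0 - \int[lebesgue_measure]_(t in [set t : R | 0 <= t <= T / N%:R]) (g t ^+ 2)| < alpha * eps ^+ 2 / 32.
  by near: N; exact: F4.
rewrite sub0r normrN.
have Npos : 0 < N%:R :> R by rewrite ltr0n.
set tau := T / N%:R.
have tau0 : 0 < tau by rewrite divr_gt0.
have tauT : tau <= T.
  by rewrite /tau ler_pdivrMr // ler_peMr ?(ltW hT) // ler1n.
have [hu0N hrs] := hsol N hN0 hN1.
have [hcl heq] : _ := hrs 1%N (introT andP (conj (leqnn 1) hN1)).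
set u1 := u N 1%N.
set v := u1 - z.
have heqv := heq v.
rewrite /= /ftau /= in heqv.
set E := \int[lebesgue_measure]_(t in [set t : R | 0 <= t <= tau]) (g t ^+ 2).
set S := `|j (u1 - u N 0%N)|.
set X := `|u1|.
set Y := `|j u1|.
set P := `|iota u1|.
set Dd := `|j (u N 0%N) - j z|.
rewrite -/tau -/u1 in heqv.
have Mu0 : 0 <= Mu by rewrite addr_ge0 // ltW.
have eps10 : 0 <= eps1 by rewrite /eps1 mulr_ge0 // ltW.
have hipb : S ^+ 2 - S * Dd <= ip (j (u1 - u N 0%N)) (j v).
  have jv : j v = j (u1 - u N 0%N) + (j (u N 0%N) - j z).
    by rewrite /v !(linB _ _ jlin) addrA subrK.
  rewrite jv (ipDr hip) (ipxx hip).
  have := ip_CS hip (j (u1 - u N 0%N)) (j (u N 0%N) - j z).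
  rewrite ler_norml => /andP[h _]; rewrite -/S -/Dd in h *; lra.
have hAb' : alpha * X ^+ 2 - beta * Y ^+ 2 - (a + b * X) * K <= A u1 v.
  have lA := dual_lin (hAd u1).
  have e : A u1 v = A u1 u1 - A u1 z := linB _ _ lA.
  rewrite e; have hco := hAcoer u1.
  have hAz : A u1 z <= (a + b * X) * K.
    apply: (le_trans (ler_norm _)); apply: (le_trans (dnorm_bound (hAd u1) z)).
    by apply: ler_wpM2r => //; exact: hAb.
  rewrite -/X -/Y in hco; lra.
have hXi : - (d * (1 + P) * (P + Q)) <= xi N 1%N (iota v).
  have hd1 : is_dual (xi N 1%N) := hcl.1.
  have hb1 : dnorm (xi N 1%N) <= d * (1 + P) := hJb _ _ hcl.
  have hn : `|iota v| <= P + Q by rewrite /v (linB _ _ iotalin); exact: ler_normB.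
  have : `|xi N 1%N (iota v)| <= d * (1 + P) * (P + Q).
    exact: le_trans (dnorm_bound hd1 _) (ler_pM (dnorm_ge0 hd1) (normr_ge0 _) hb1 hn).
  by rewrite ler_norml => /andP[h _].
have c0 : 0 < alpha / 8 by rewrite divr_gt0.
have hI : intf f 0 tau v <= alpha / 8 * tau * (X + K) ^+ 2 + 2 / alpha * E.
  have := intf_bound (introT andP (conj tau0 tauT)) c0 (normr_ge0 v) mg g0 ig (hfm v) (fun t => gb t v).
  rewrite -/E => h; rewrite /intf; apply: (le_trans (ler_norm _)); apply: (le_trans h).
  have hv : `|v| <= X + K by exact: ler_normB.
  have hv2 : `|v| ^+ 2 <= (X + K) ^+ 2.
    by rewrite !expr2; apply: ler_pM.
  have e2 : (4 * (alpha / 8))^-1 * E = 2 / alpha * E.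
    by congr (_ * _); field; rewrite gt_eqF.
  have hv3 : alpha / 8 * tau * `|v| ^+ 2 <= alpha / 8 * tau * (X + K) ^+ 2.
    by apply: ler_wpM2l => //; rewrite mulr_ge0 // ltW.
  lra.
have hY : Y <= S + Mu.
  have e : j u1 = j (u1 - u N 0%N) + j (u N 0%N) by rewrite (linB _ _ jlin) subrK.
  have h5 : `|j (u N 0%N)| <= `|u0| + delta.
    rewrite hu0N; have := ler_normD u0 (j (u0tau N) - u0); rewrite addrC subrK distrC.
    move=> h; apply: (le_trans h); rewrite lerD2l; exact: ltW.
  rewrite /Y e; apply: (le_trans (ler_normD _ _)); rewrite /Mu -/S; lra.
have hDd : Dd <= eps / 4.
  have := ler_distD u0 (j (u N 0%N)) (j z); rewrite -/Dd hu0N distrC => h.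
  have : eps / 4 = delta + delta by rewrite /delta; field.
  move=> ->; apply: (le_trans h); apply: lerD; exact: ltW.
have hmain := main_arith halpha hbeta ha (ltW hb) hd (normr_ge0 z) (normr_ge0 (iota z))
  eps10 C10 Mu0 tau0 (normr_ge0 _) (normr_ge0 u1) (normr_ge0 (j u1)) (normr_ge0 (iota u1))
  heqv hipb hAb' hXi hI (hP u1) he' hY.
have t6 : tau * c6 <= 1 / 2 by apply: small_mul => //; exact: ltW.
have t5 : tau * c5v <= eps ^+ 2 / 16.
  apply: (@le_trans _ _ (tau * `|c5v|)).
    by apply: ler_wpM2l; [exact: ltW | exact: ler_norm].
  by apply: small_mul => //; [exact: ltW | rewrite divr_gt0 // exprn_gt0].
have t4 : 2 / alpha * E <= eps ^+ 2 / 16.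
  move: h4; rewrite sub0r normrN => h.
  have : E <= alpha * eps ^+ 2 / 32 by exact: le_trans (ler_norm E) (ltW h).
  move=> hE; have : 2 / alpha * E <= 2 / alpha * (alpha * eps ^+ 2 / 32).
    by rewrite ler_wpM2l // divr_ge0 // ltW.
  have -> : 2 / alpha * (alpha * eps ^+ 2 / 32) = eps ^+ 2 / 16 by field; rewrite gt_eqF.
  by [].
apply: (final_arith (normr_ge0 _) eps0 (ltW tau0) c60 _ t6 _ hDd).
  exact: hmain.
have hsum : tau * c5v + 2 / alpha * E <= eps ^+ 2 / 8 by lra.
exact: hsum.
Unshelve. all: by end_near.
Qed.
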